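(* There exists a constant $C>0$ such that infinitely many integers $\ell\ge1$ satisfy $$\sum_{i=1}^{\ell-1}i\,q(i)\le C\,\ell\,Q(\ell).$$
   Context: A sign-decorated binary tree is a finite planar rooted tree in which every internal vertex (node) has exactly two ordered children and carries a sign $\oplus$ or $\ominus$; $\mathrm{LIS}(t)$ is the maximal number of leaves in a set of leaves whose pairwise highest common ancestors all carry $\oplus$. Fix $p\in(0,1)$. $T$ is a critical binary Bienaymé–Galton–Watson tree with i.i.d. node signs, $\mathbb P(\oplus)=p$; $q(k)=\mathbb P(\mathrm{LIS}(T)=k)$, $Q(k)=\mathbb P(\mathrm{LIS}(T)\ge k)$. *)

(* Defs.v *)
From mathcomp Require Import all_boot all_order all_algebra.
From mathcomp Require Import all_classical all_reals all_analysis.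
Set Implicit Arguments. Unset Strict Implicit. Unset Printing Implicit Defensive.
Import Order.TTheory GRing.Theory Num.Theory numFieldNormedType.Exports.

(* Sign-decorated binary trees: every internal node has two ordered children
   and a sign; [true] stands for (+) and [false] for (-). *)
Inductive stree : Type :=
| Leaf : stree
| Node : bool -> stree -> stree -> stree.

(* Vertices are addressed by paths from the root: [false] = left child,
   [true] = right child. *)
Fixpoint leaves (t : stree) : seq (seq bool) :=
  match t with
  | Leaf => [:: [::]]
  | Node _ l r => map (cons false) (leaves l) ++ map (cons true) (leaves r)
  end.

Fixpoint sign_at (t : stree) (a : seq bool) : option bool :=
  match t, a with
  | Leaf, _ => None
  | Node s _ _, [::] => Some s
  | Node _ l r, b :: a' => sign_at (if b then r else l) a'
  end.

(* highest common ancestor of two vertices = longest common prefix *)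
Fixpoint hca (u v : seq bool) : seq bool :=
  match u, v with
  | x :: u', y :: v' => if x == y then x :: hca u' v' else [::]
  | _, _ => [::]
  end.

Definition plus_set (t : stree) (s : seq (seq bool)) : bool :=
  pairwise (fun u v => sign_at t (hca u v) == Some true) s.

(* LIS(t): maximal number of leaves in such a set (subsets of the leaf set
   are encoded by masks on the list of leaves). *)
Definition LIS (t : stree) : nat :=
  \max_(m : (size (leaves t)).-tuple bool | plus_set t (mask m (leaves t)))
     count id m.

Fixpoint n_internal (t : stree) : nat :=
  match t with
  | Leaf => 0
  | Node _ l r => (n_internal l + n_internal r).+1
  end.

Fixpoint trees_upto (h : nat) : seq stree :=
  match h with
  | 0 => [:: Leaf]
  | h'.+1 =>
      Leaf :: flatten [seq [seq Node s lr.1 lr.2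
                              | lr <- [seq (l, r) | l <- trees_upto h',
                                                    r <- trees_upto h']]
                      | s <- [:: true; false]]
  end.

(* all trees with exactly n internal nodes (their height is <= n) *)
Definition trees_size (n : nat) : seq stree :=
  [seq t <- trees_upto n | n_internal t == n].

Local Open Scope ring_scope.

(* Law of the critical binary Bienayme-Galton-Watson tree with i.i.d. signs,
   P(+) = p: each vertex has 0 or 2 children with probability 1/2 each. *)
Fixpoint bgw_weight (R : realType) (p : R) (t : stree) : R :=
  match t with
  | Leaf => 2^-1
  | Node s l r =>
      2^-1 * (if s then p else 1 - p) * bgw_weight p l * bgw_weight p r
  end.

(* P(T satisfies P), summing over the (a.s. finite) tree by number of
   internal nodes: the limit of the partial sums of the series. *)
Definition bgw_prob (R : realType) (p : R) (P : stree -> bool) : R :=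
  limn (series (fun n : nat => \sum_(t <- trees_size n | P t) bgw_weight p t)).

Definition q (R : realType) (p : R) (k : nat) : R :=
  bgw_prob p (fun t => LIS t == k).
Definition Q (R : realType) (p : R) (k : nat) : R :=
  bgw_prob p (fun t => (k <= LIS t)%N).

(* Main.v *)
From HB Require Import structures.
Require Import Defs.
From mathcomp Require Import all_boot all_order all_algebra.
From mathcomp Require Import all_classical all_reals all_analysis.
From mathcomp Require Import zify ring lra.
Import Order.TTheory GRing.Theory Num.Theory numFieldNormedType.Exports.

Fixpoint stree_eqb (t u : stree) : bool :=
  match t, u with
  | Leaf, Leaf => true
  | Node s l r, Node s' l' r' => (s == s') && stree_eqb l l' && stree_eqb r r'
  | _, _ => false end.
Lemma stree_eqP : Equality.axiom stree_eqb.
Proof.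
elim=> [|s l IHl r IHr] [|s' l' r'] /=; try by constructor.
case: eqP => [<-|ne]; last by constructor=> -[].
case: IHl => [<-|ne]; last by constructor=> -[].
case: IHr => [<-|ne]; last by constructor=> -[].
by constructor.
Qed.
HB.instance Definition _ := hasDecEq.Build stree stree_eqP.

Fixpoint height t := match t with Leaf => 0%N | Node _ l r => (maxn (height l) (height r)).+1 end.

Lemma mem_nodes (U : seq stree) s x :
  x \in [seq Node s lr.1 lr.2 | lr <- [seq (l, r) | l <- U, r <- U]] =
  if x is Node s' l r then [&& s' == s, l \in U & r \in U] else false.
Proof.
case: x => [|s' l r]; first by apply/mapP => -[[a b] _].
apply/mapP/and3P => [[[a b] /allpairsP [[a' b'] /= [ha hb [-> ->]]] [-> -> ->]]|].
  by [].
case=> /eqP -> hl hr; exists (l, r) => //; apply/allpairsP; by exists (l, r).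
Qed.

Lemma upto_S h : trees_upto h.+1 = Leaf :: ([seq Node true lr.1 lr.2 | lr <- [seq (l, r) | l <- trees_upto h, r <- trees_upto h]] ++ [seq Node false lr.1 lr.2 | lr <- [seq (l, r) | l <- trees_upto h, r <- trees_upto h]]).
Proof. by rewrite /= cats0. Qed.

Lemma mem_upto h t : (t \in trees_upto h) = (height t <= h)%N.
Proof.
elim: h t => [|h IH] [|s l r] //.
rewrite upto_S inE /= mem_cat !mem_nodes !IH ltnS geq_max.
by case: s; rewrite /= ?orbF.

Qed.

Lemma uniq_upto h : uniq (trees_upto h).
Proof.
elim: h => [//|h IH]; rewrite upto_S /= cat_uniq !mem_cat !mem_nodes /=.
have inj s : injective (fun lr : stree * stree => Node s lr.1 lr.2).
  by move=> [a b] [c d] [-> ->].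
rewrite !(map_inj_uniq (inj _)) allpairs_uniq //=; last by move=> [a b] [c d] _ _ [-> ->].
rewrite andbT; apply/hasPn => x /mapP [[a b] _ ->]; by rewrite mem_nodes.
Qed.
Fixpoint lis t := match t with Leaf => 1%N | Node true l r => (lis l + lis r)%N | Node false l r => maxn (lis l) (lis r) end.

Lemma allrel_const (c : bool) (a b : seq (seq bool)) :
  allrel (fun _ _ => c) a b = c || nilp a || nilp b.
Proof.
case: c; first by rewrite /=; apply/allrelP.
case: a => [|x a]; case: b => [|y b] //=; by rewrite allrel0r.
Qed.

Lemma plus_set_node s l r a b :
  plus_set (Node s l r) (map (cons false) a ++ map (cons true) b) =
  [&& s || nilp a || nilp b, plus_set l a & plus_set r b].
Proof.
rewrite /plus_set pairwise_cat !pairwise_map allrel_mapl allrel_mapr /=.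
rewrite (_ : allrel _ a b = allrel (fun _ _ => s) a b) ?allrel_const //.
by case: s.
Qed.

Lemma lis_ub t m : size m = size (leaves t) -> plus_set t (mask m (leaves t)) -> (count id m <= lis t)%N.
Proof.
elim: t m => [|s l IHl r IHr] m /=.
  by case: m => [|b [|]] //= _ _; case: b.
rewrite size_cat !size_map => Hs.
rewrite -(cat_take_drop (size (leaves l)) m) mask_cat; last by rewrite size_map size_takel // Hs leq_addr.
rewrite -!map_mask plus_set_node count_cat => /and3P [Hc Hl Hr].
have Hsl : size (take (size (leaves l)) m) = size (leaves l) by rewrite size_takel // Hs leq_addr.
have Hsr : size (drop (size (leaves l)) m) = size (leaves r) by rewrite size_drop; lia.
have := IHl _ Hsl Hl; have := IHr _ Hsr Hr.
case: s Hc => /= Hc; first lia.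
move: Hc; rewrite /nilp !size_mask // => /orP [] /eqP -> ; lia.
Qed.

Lemma lis_ex t : exists2 m, size m = size (leaves t) & plus_set t (mask m (leaves t)) && (count id m == lis t).
Proof.
elim: t => [|s l [ml Hsl /andP [Hl /eqP Hcl]] r [mr Hsr /andP [Hr /eqP Hcr]]].
  by exists [:: true].
have mk s' m1 m2 : size m1 = size (leaves l) -> size m2 = size (leaves r) ->
   mask (m1 ++ m2) (leaves (Node s' l r)) = map (cons false) (mask m1 (leaves l)) ++ map (cons true) (mask m2 (leaves r)).
  by move=> h1 h2; rewrite /= mask_cat ?size_map // -!map_mask.
case: s.
  exists (ml ++ mr); first by rewrite size_cat Hsl Hsr /= size_cat !size_map.
  by rewrite mk // plus_set_node Hl Hr count_cat Hcl Hcr /=.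
case: (leqP (lis r) (lis l)) => hlr.
  exists (ml ++ nseq (size (leaves r)) false); first by rewrite size_cat Hsl size_nseq /= size_cat !size_map.
  rewrite mk ?size_nseq // mask_false plus_set_node Hl /= orbT /= count_cat Hcl count_nseq /=.
apply/eqP; lia.
exists (nseq (size (leaves l)) false ++ mr); first by rewrite size_cat Hsr size_nseq /= size_cat !size_map.
rewrite mk ?size_nseq // mask_false plus_set_node Hr /= count_cat Hcr count_nseq /=.
apply/eqP; lia.
Qed.

Lemma LIS_lis t : LIS t = lis t.
Proof.
rewrite /LIS; apply/eqP; rewrite eqn_leq; apply/andP; split.
  by apply/bigmax_leqP => m Hm; apply: lis_ub => //; rewrite size_tuple.
have [m Hs /andP[Hp /eqP Hc]] := lis_ex t.
have Hs' : size m == size (leaves t) by apply/eqP.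
rewrite -Hc; exact: (@leq_bigmax_cond _ _ _ (Tuple Hs')).
Qed.

Lemma height_le_nint t : (height t <= n_internal t)%N.
Proof. elim: t => [|s l IHl r IHr] //=; rewrite ltnS geq_max; apply/andP; split; lia. Qed.

Lemma nint_lt t : (n_internal t < 2 ^ height t)%N.
Proof.
elim: t => [|s l IHl r IHr] //=.
have h1 : (2 ^ height l <= 2 ^ maxn (height l) (height r))%N by rewrite leq_exp2l // leq_maxl.
have h2 : (2 ^ height r <= 2 ^ maxn (height l) (height r))%N by rewrite leq_exp2l // leq_maxr.
rewrite expnS; lia.
Qed.

Local Open Scope ring_scope.

Lemma sum_if_eq (R : realType) (x K : nat) (a : R) :
  \sum_(0 <= n < K) (if x == n then a else 0) = if (x < K)%N then a else 0.
Proof.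
elim: K => [|K IH]; first by rewrite big_geq.
rewrite big_nat_recr //= IH.
case: (ltngtP x K) => [h|h|->].
- by rewrite ltnS ltnW // addr0.
- by rewrite ltnS leqNgt h addr0.
- by rewrite ltnSn add0r.
Qed.

Lemma sub_sum (R : realType) (F : stree -> R) (s1 s2 : seq stree) :
  uniq s1 -> uniq s2 -> {subset s1 <= s2} -> (forall t, 0 <= F t) ->
  \sum_(t <- s1) F t <= \sum_(t <- s2) F t.
Proof.
move=> u1 u2 sub F0.
rewrite (perm_big [seq t <- s2 | t \in s1]); last first.
  apply: uniq_perm => //; first exact: filter_uniq.
  by move=> x; rewrite mem_filter; case: (boolP (x \in s1)) => // /sub ->.
rewrite big_filter big_mkcond /=; apply: ler_sum => t _; case: ifP => //.
Qed.

Section Sums.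
Variable R : realType.
Implicit Types F : stree -> R.

Definition Uh F h := \sum_(t <- trees_upto h) F t.
Definition Pser F := series (fun n => \sum_(t <- trees_size n) F t).

Lemma Pser_eq F N : Pser F N.+1 = \sum_(t <- trees_upto N | (n_internal t <= N)%N) F t.
Proof.
rewrite /Pser /series /=.
transitivity (\sum_(0 <= n < N.+1) \sum_(t <- trees_upto N) (if n_internal t == n then F t else 0)).
  apply: eq_big_nat => n /andP [_ hn]; rewrite -big_mkcond -[RHS]big_filter /trees_size.
  apply: perm_big; apply: uniq_perm; try exact: (filter_uniq _ (uniq_upto _)).
  move=> t; rewrite !mem_filter !mem_upto; case: eqP => //= ht.
  have := height_le_nint t; rewrite ht => h; rewrite h; apply/esym; apply: leq_trans h _; lia.
rewrite exchange_big /= [RHS]big_mkcond /=; apply: eq_bigr => t _.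
by rewrite sum_if_eq ltnS.
Qed.

Lemma Pser_le_Uh F N : (forall t, 0 <= F t) -> Pser F N.+1 <= Uh F N.
Proof.
move=> F0; rewrite Pser_eq /Uh big_mkcond /=; apply: ler_sum => t _.
by case: ifP.
Qed.

Lemma Uh_le_Pser F h : (forall t, 0 <= F t) -> Uh F h <= Pser F (2 ^ h).+1.
Proof.
move=> F0; rewrite Pser_eq -big_filter /Uh; apply: sub_sum => //.
- exact: uniq_upto.
- exact: (filter_uniq _ (uniq_upto _)).
move=> t; rewrite mem_filter !mem_upto => ht.
have h1 := nint_lt t.
have h2 : (2 ^ height t <= 2 ^ h)%N by rewrite leq_exp2l.
have h3 : (h < 2 ^ h)%N by exact: ltn_expl.
apply/andP; split; lia.
Qed.

Lemma Uh_nd F : (forall t, 0 <= F t) -> nondecreasing_seq (Uh F).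
Proof.
move=> F0; apply/nondecreasing_seqP => h; apply: sub_sum => //; try exact: uniq_upto.
by move=> t; rewrite !mem_upto => ht; lia.
Qed.

Lemma Pser_nd F : (forall t, 0 <= F t) -> nondecreasing_seq (Pser F).
Proof.
move=> F0; apply/nondecreasing_seqP => n; rewrite /Pser /series /= big_nat_recr //=.
by rewrite lerDl sumr_ge0.
Qed.

Lemma lim_Pser_Uh F M : (forall t, 0 <= F t) -> (forall h, Uh F h <= M) ->
  cvgn (Uh F) /\ limn (Pser F) = limn (Uh F).
Proof.
move=> F0 FM.
have cU : cvgn (Uh F).
  apply: nondecreasing_is_cvgn; first exact: Uh_nd.
  by exists M => _ [h _ <-].
have cP : cvgn (Pser F).
  apply: nondecreasing_is_cvgn; first exact: Pser_nd.
  exists M => _ [n _ <-].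
  exact: (le_trans (le_trans (Pser_nd _ F0 _ _ (leqnSn n)) (Pser_le_Uh _ n F0)) (FM n)).
split => //; apply/eqP; rewrite eq_le; apply/andP; split.
  apply: ler_lim => //; apply: nearW => n.
  exact: (le_trans (Pser_nd _ F0 _ _ (leqnSn n)) (Pser_le_Uh _ n F0)).
apply: limr_le => //; apply: nearW => h.
exact: (le_trans (Uh_le_Pser _ h F0) (nondecreasing_cvgn_le (Pser_nd _ F0) cP _)).
Qed.

End Sums.
Arguments Uh {R}.
Arguments Pser {R}.

Lemma sum_ind_eq (R : realType) (x K : nat) (g : nat -> R) :
  \sum_(0 <= n < K) (x == n)%:R * g n = (x < K)%:R * g x.
Proof.
elim: K => [|K IH]; first by rewrite big_geq // mul0r.
rewrite big_nat_recr //= IH.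
case: (ltngtP x K) => [h|h|->].
- by rewrite ltnS ltnW // mul0r addr0.
- by rewrite ltnS leqNgt h !mul0r addr0.
- by rewrite ltnSn mul0r add0r.
Qed.

Lemma ind_add (R : realType) (k a b : nat) :
  ((k <= a + b)%N)%:R = ((k <= a)%N)%:R + \sum_(0 <= i < k) (a == i)%:R * ((k - i <= b)%N)%:R :> R.
Proof.
rewrite sum_ind_eq; case: (leqP k a) => h.
  by rewrite (leq_trans h (leq_addr _ _)) mul0r addr0.
have -> : (k <= a + b)%N = (k - a <= b)%N by apply/idP/idP; lia.
by rewrite mul1r add0r.
Qed.

Lemma ind_max (R : realType) (k a b : nat) :
  ((k <= maxn a b)%N)%:R = ((k <= a)%N)%:R + ((k <= b)%N)%:R - ((k <= a)%N)%:R * ((k <= b)%N)%:R :> R.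
Proof. by rewrite leq_max; case: (k <= a)%N; case: (k <= b)%N; rewrite /= ?mul1r ?mul0r; ring. Qed.

Lemma lis_ge1 t : (1 <= lis t)%N.
Proof. elim: t => [|[] l IHl r IHr] //=; [lia|by rewrite leq_max IHl]. Qed.

Local Open Scope classical_set_scope.
Section Prob.
Variable R : realType.
Variable p : R.
Hypotheses (hp0 : 0 < p) (hp1 : p < 1).

Local Notation w := (bgw_weight p).

Lemma w_ge0 t : 0 <= w t.
Proof.
elim: t => [|s l IHl r IHr] /=; first by rewrite invr_ge0.
apply: mulr_ge0 => //; apply: mulr_ge0 => //; apply: mulr_ge0; first by rewrite invr_ge0.
by case: s; [apply: ltW|rewrite subr_ge0; apply: ltW].
Qed.

Definition Fb (b : stree -> bool) t := (b t)%:R * w t.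

Lemma Fb_ge0 b t : 0 <= Fb b t.
Proof. by apply: mulr_ge0 => //; apply: w_ge0. Qed.

Lemma Fb_le b t : Fb b t <= w t.
Proof. by rewrite /Fb; case: (b t); rewrite ?mul1r ?mul0r ?w_ge0. Qed.

Lemma Uh_S (F : stree -> R) h : Uh F h.+1 = F Leaf +
  \sum_(l <- trees_upto h) \sum_(r <- trees_upto h) F (Node true l r) +
  \sum_(l <- trees_upto h) \sum_(r <- trees_upto h) F (Node false l r).
Proof. by rewrite /Uh upto_S big_cons big_cat !big_map !big_allpairs /= addrA. Qed.

Lemma dsum_prod (f g : stree -> R) h :
  Uh f h * Uh g h = \sum_(l <- trees_upto h) \sum_(r <- trees_upto h) f l * g r.
Proof. rewrite /Uh mulr_suml; apply: eq_bigr => l _; by rewrite mulr_sumr. Qed.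

Lemma Uh_w_le1 h : Uh w h <= 1.
Proof.
elim: h => [|h IH]; first by rewrite /Uh /= big_cons big_nil addr0 invf_le1 // ler1n.
have h0 : 0 <= Uh w h by apply: sumr_ge0 => t _; apply: w_ge0.
have e : Uh w h.+1 = 2^-1 + 2^-1 * (Uh w h * Uh w h).
  rewrite Uh_S -addrA -big_split /= dsum_prod mulr_sumr; congr (_ + _); apply: eq_bigr => l _.
  rewrite -big_split mulr_sumr; apply: eq_bigr => r _ /=; ring.
rewrite e; have : Uh w h * Uh w h <= 1 by rewrite -(mulr1 1); apply: ler_pM.
lra.
Qed.

Lemma Uh_Fb_le1 b h : Uh (Fb b) h <= 1.
Proof. apply: le_trans (Uh_w_le1 h); apply: ler_sum => t _; exact: Fb_le. Qed.

Definition E b := limn (Uh (Fb b)).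

Lemma cvg_Fb b : Uh (Fb b) @ \oo --> E b.
Proof.
have [c _] := @lim_Pser_Uh R (Fb b) 1 (Fb_ge0 b) (Uh_Fb_le1 b).
exact: c.
Qed.

Lemma bgw_prob_E (P : stree -> bool) : bgw_prob p P = E P.
Proof.
have [_ e] := @lim_Pser_Uh R (Fb P) 1 (Fb_ge0 P) (Uh_Fb_le1 P).
rewrite /E -e /bgw_prob /Pser; congr (limn (series _)); apply: funext => n.
by rewrite big_mkcond; apply: eq_bigr => t _; rewrite /Fb; case: (P t); rewrite ?mul1r ?mul0r.
Qed.


Lemma dsum_sum (F G : nat -> stree -> R) k h :
  \sum_(0 <= i < k) Uh (F i) h * Uh (G i) h =
  \sum_(l <- trees_upto h) \sum_(r <- trees_upto h) \sum_(0 <= i < k) F i l * G i r.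
Proof.
under eq_bigr do rewrite dsum_prod.
rewrite exchange_big; apply: eq_bigr => l _; by rewrite exchange_big.
Qed.

Lemma dsum_comb (c : R) (f g : stree -> R) (F G : nat -> stree -> R) k h :
  \sum_(l <- trees_upto h) \sum_(r <- trees_upto h) (c * (f l * g r + \sum_(0 <= i < k) F i l * G i r))
  = c * (Uh f h * Uh g h + \sum_(0 <= i < k) Uh (F i) h * Uh (G i) h).
Proof.
rewrite dsum_prod dsum_sum -big_split mulr_sumr; apply: eq_bigr => l _.
by rewrite -big_split mulr_sumr.
Qed.

Lemma dsum_comb0 (c : R) (f g a b u v : stree -> R) h :
  \sum_(l <- trees_upto h) \sum_(r <- trees_upto h) (c * (f l * g r + a l * b r - u l * v r))
  = c * (Uh f h * Uh g h + Uh a h * Uh b h - Uh u h * Uh v h).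
Proof.
rewrite !dsum_prod -big_split -sumrB mulr_sumr; apply: eq_bigr => l _.
by rewrite -big_split -sumrB mulr_sumr.
Qed.

Definition Ak k := fun t => (k <= lis t)%N.
Definition Bi i := fun t => lis t == i.
Definition top := fun _ : stree => true.
Definition V b h := Uh (Fb b) h.

Lemma rec_A k h : (2 <= k)%N ->
  V (Ak k) h.+1 = p / 2 * (V (Ak k) h * V top h + \sum_(0 <= i < k) V (Bi i) h * V (Ak (k - i)) h)
   + (1 - p) / 2 * (V (Ak k) h * V top h + V top h * V (Ak k) h - V (Ak k) h * V (Ak k) h).
Proof.
move=> hk; rewrite /V Uh_S.
rewrite {1}/Fb /Ak /= (_ : (k <= 1)%N = false); last by apply/negbTE; rewrite -ltnNge.
rewrite mul0r add0r.
rewrite -(dsum_comb (p / 2) (Fb (Ak k)) (Fb top) (fun i => Fb (Bi i)) (fun i => Fb (Ak (k - i))) k h).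
rewrite -(dsum_comb0 ((1 - p) / 2) (Fb (Ak k)) (Fb top) (Fb top) (Fb (Ak k)) (Fb (Ak k)) (Fb (Ak k)) h).
congr (_ + _); apply: eq_bigr => l _; apply: eq_bigr => r _; rewrite /Fb /Ak /Bi /top /=.
  rewrite ind_add mulrDl.
  have -> : \sum_(0 <= i < k) ((lis l == i)%:R * w l) * ((k - i <= lis r)%N%:R * w r) =
     (\sum_(0 <= i < k) (lis l == i)%:R * (k - i <= lis r)%N%:R) * (w l * w r).
    by rewrite mulr_suml; apply: eq_bigr => i _; ring.
  ring.
rewrite ind_max; ring.
Qed.

Lemma rec_top h : V top h.+1 = 2^-1 + 2^-1 * (V top h * V top h).
Proof.
rewrite /V Uh_S {1}/Fb /top /= mul1r -addrA dsum_prod -big_split mulr_sumr; congr (_ + _).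
apply: eq_bigr => l _; rewrite -big_split mulr_sumr; apply: eq_bigr => r _; rewrite /Fb /=; ring.
Qed.

Lemma lin_B i h : V (Bi i) h = V (Ak i) h - V (Ak i.+1) h.
Proof.
rewrite /V /Uh -sumrB; apply: eq_bigr => t _; rewrite /Fb /Bi /Ak -mulrBl; congr (_ * _).
case E1: (i <= lis t)%N; case E2: (i.+1 <= lis t)%N; case E3: (lis t == i);
  rewrite /= ?subrr ?subr0 ?sub0r //; exfalso; lia.
Qed.

Lemma cvg_sum_nat (f : nat -> nat -> R) (l : nat -> R) k :
  (forall i, f i @ \oo --> l i) ->
  (fun h => \sum_(0 <= i < k) f i h) @ \oo --> \sum_(0 <= i < k) l i.
Proof.
move=> hf; elim: k => [|k IH].
  rewrite big_geq //; under eq_fun do rewrite big_geq //; exact: cvg_cst.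
rewrite big_nat_recr //=; under eq_fun do rewrite big_nat_recr //=.
exact: cvgD.
Qed.

Lemma E_ge0 b : 0 <= E b.
Proof.
apply: limr_ge; first by apply/cvg_ex; exists (E b); exact: cvg_Fb.
by apply: nearW => h; apply: sumr_ge0 => t _; apply: Fb_ge0.
Qed.

Lemma cvgS b : (fun h => V b h.+1) @ \oo --> E b.
Proof. have := cvg_Fb b; rewrite -cvg_shiftS; exact. Qed.

Lemma mass1 : E top = 1.
Proof.
have e1 := cvgS top.
have e2 : (fun h => V top h.+1) @ \oo --> 2^-1 + 2^-1 * (E top * E top).
  under eq_fun do rewrite rec_top.
  apply: cvgD; first exact: cvg_cst.
  apply: cvgMl_tmp; exact: cvgM (cvg_Fb _) (cvg_Fb _).
have e := (@cvg_unique _ (@Rhausdorff R) _ _ _ _ e1 e2).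
have {}e := e _.
have e3 : 2 * E top = 1 + E top * E top by rewrite {1}e; field.
have ee : E top * E top = 2 * E top - 1 by lra.
have : (E top - 1) ^+ 2 = 0.
  rewrite (_ : (E top - 1) ^+ 2 = E top * E top - 2 * E top + 1); last by ring.
  by rewrite ee; ring.
by move/eqP; rewrite sqrf_eq0 subr_eq0 => /eqP.
Qed.

Lemma B_eq i : E (Bi i) = E (Ak i) - E (Ak i.+1).
Proof.
have e1 := cvg_Fb (Bi i).
have e2 : Uh (Fb (Bi i)) @ \oo --> E (Ak i) - E (Ak i.+1).
  rewrite (_ : Uh (Fb (Bi i)) = fun h => V (Ak i) h - V (Ak i.+1) h); last first.
    by apply: funext => h; rewrite -lin_B.
  exact: cvgB (cvg_Fb _) (cvg_Fb _).
exact: (@cvg_unique _ (@Rhausdorff R) _ _ _ _ e1 e2).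
Qed.

Lemma A_rec k : (2 <= k)%N ->
  E (Ak k) = p / 2 * (E (Ak k) * E top + \sum_(0 <= i < k) E (Bi i) * E (Ak (k - i)))
   + (1 - p) / 2 * (E (Ak k) * E top + E top * E (Ak k) - E (Ak k) * E (Ak k)).
Proof.
move=> hk; have e1 := cvgS (Ak k).
have e2 : (fun h => V (Ak k) h.+1) @ \oo --> p / 2 * (E (Ak k) * E top + \sum_(0 <= i < k) E (Bi i) * E (Ak (k - i)))
   + (1 - p) / 2 * (E (Ak k) * E top + E top * E (Ak k) - E (Ak k) * E (Ak k)).
  under eq_fun do rewrite rec_A //.
  apply: cvgD; apply: cvgMl_tmp.
    apply: cvgD; first exact: cvgM (cvg_Fb _) (cvg_Fb _).
    by apply: cvg_sum_nat => i; exact: cvgM (cvg_Fb _) (cvg_Fb _).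
  apply: cvgB; last exact: cvgM (cvg_Fb _) (cvg_Fb _).
  by apply: cvgD; exact: cvgM (cvg_Fb _) (cvg_Fb _).
exact: (@cvg_unique _ (@Rhausdorff R) _ _ _ _ e1 e2).
Qed.

End Prob.
Arguments E {R}.
Arguments V {R}.
Arguments Fb {R}.
Section Analytic.
Variable R : realType.
Variables (p : R) (Q q : nat -> R).
Hypotheses (hp0 : 0 < p) (hp1 : p < 1).
Hypothesis hq : forall i, q i = Q i - Q i.+1.
Hypothesis hq0 : forall i, 0 <= q i.
Hypothesis hQ0 : forall i, 0 <= Q i.
Hypothesis hQz : Q 0 = 1.
Hypothesis hQ1 : Q 1 = 1.
Hypothesis hJ : forall k, (2 <= k)%N ->
  p * Q k + (1 - p) * Q k ^+ 2 = p * \sum_(0 <= i < k) q i * Q (k - i).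

Lemma Qmono i j : (i <= j)%N -> Q j <= Q i.
Proof.
move=> /subnK <-; elim: (j - i)%N => [|n IH]; first by rewrite add0n.
by rewrite addSn; apply: le_trans IH; have := hq0 (n + i)%N; rewrite hq subr_ge0.
Qed.

Lemma sumq a b : (a <= b)%N -> \sum_(a <= i < b) q i = Q a - Q b.
Proof.
move=> hab; rewrite (eq_bigr (fun i => - (Q i.+1 - Q i))); last by move=> i _; rewrite hq opprB.
by rewrite sumrN telescope_sumr // opprB.
Qed.

Lemma Dform l : (2 <= l)%N -> \sum_(0 <= i < l) q i * (Q (l - i) - Q l) = Q l ^+ 2 / p.
Proof.
move=> hl.
have hs : \sum_(0 <= i < l) q i * Q (l - i) = (p * Q l + (1 - p) * Q l ^+ 2) / p.
  by rewrite hJ // mulrC mulKf // gt_eqF.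
rewrite (eq_bigr (fun i => q i * Q (l - i) - q i * Q l)); last by move=> i _; rewrite mulrBr.
rewrite sumrB -mulr_suml sumq // hQz hs.
have hp : p != 0 by rewrite gt_eqF.
by field.
Qed.

Lemma Q2zero m : (1 <= m)%N -> Q (2 * m) = 0 -> Q m = 0.
Proof.
move=> hm h0; have := Dform (2 * m) ltac:(lia).
rewrite h0 expr0n /= mul0r.
under eq_bigr do rewrite subr0.
rewrite (big_cat_nat _ (n := m)) //=; [|lia].
have h1 : 0 <= \sum_(0 <= i < m) q i * Q (2 * m - i) by apply: sumr_ge0 => i _; apply: mulr_ge0.
have h2 : \sum_(m <= i < 2 * m) q i * Q m <= \sum_(m <= i < 2 * m) q i * Q (2 * m - i).
  apply: ler_sum_nat => i /andP [hi1 hi2]; apply: ler_wpM2l => //; apply: Qmono; lia.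
rewrite -mulr_suml sumq in h2; last lia.
rewrite h0 subr0 in h2 => h3.
have h4 : Q m * Q m <= 0 by lra.
apply/eqP; rewrite -sqrf_eq0 eq_le sqr_ge0 andbT expr2 //.
Qed.

Lemma Qpos m : (1 <= m)%N -> 0 < Q m.
Proof.
elim/ltn_ind: m => m IH hm.
case: (m =P 1%N) => [->|ne]; first by rewrite hQ1 ltr01.
have h1 : (1 <= m.+1 %/ 2)%N by lia.
have h2 : (m.+1 %/ 2 < m)%N by lia.
have h3 : (m <= 2 * (m.+1 %/ 2))%N by lia.
have := IH _ h2 h1 => hpos.
have hz : Q (2 * (m.+1 %/ 2)) != 0.
  by apply/eqP => /(Q2zero _ h1) hz; rewrite hz ltxx in hpos.
have hge := hQ0 (2 * (m.+1 %/ 2)).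
apply: lt_le_trans (Qmono _ _ h3); rewrite lt_def hz hge.
by [].
Qed.

Lemma Tbound m i : (1 <= m)%N -> (i <= m)%N ->
  i%:R * (Q m - Q (2 * m)) <= \sum_(m <= l < 3 * m) (Q (l - i) - Q l).
Proof.
move=> hm; elim: i => [|i IH] hi.
  by rewrite mul0r big1 // => l _; rewrite subn0 subrr.
have hd : \sum_(m <= l < 3 * m) (Q (l - i.+1) - Q l) =
   \sum_(m <= l < 3 * m) (Q (l - i) - Q l) +
   \sum_(m <= l < 3 * m) (- Q (l.+1 - i.+1) - - Q (l - i.+1)).
  rewrite -big_split /=; apply: eq_bigr => l _; rewrite subSS; ring.
have ht := @telescope_sumr _ m (3 * m) (fun k => - Q (k - i.+1)) ltac:(lia).
rewrite /= in ht; rewrite hd ht.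
have h1 : Q m <= Q (m - i.+1) by apply: Qmono; lia.
have h2 : Q (3 * m - i.+1) <= Q (2 * m) by apply: Qmono; lia.
have h3 := IH ltac:(lia).
rewrite -natr1; lra.
Qed.

Lemma caseA m : (2 <= m)%N ->
  (\sum_(1 <= i < m) i%:R * q i) * (Q m - Q (2 * m)) <= 2 * m%:R * Q m ^+ 2 / p.
Proof.
move=> hm.
set D := fun l => \sum_(0 <= i < l) q i * (Q (l - i) - Q l).
have s1 : \sum_(m <= l < 3 * m) D l <= 2 * m%:R * Q m ^+ 2 / p.
  rewrite (eq_big_nat _ _ (F2 := fun l => Q l ^+ 2 / p)); last first.
    move=> l /andP [hl _]; apply: Dform; lia.
  apply: le_trans (ler_sum_nat (G := fun _ => Q m ^+ 2 / p) _) _.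
    move=> l /andP [hl _]; apply: ler_wpM2r; first by rewrite invr_ge0 ltW.
    rewrite !expr2; apply: ler_pM => //; apply: Qmono => //.
  rewrite sumr_const_nat (_ : (3 * m - m = 2 * m)%N); last lia.
  rewrite -[X in X <= _]mulr_natr natrM le_eqVlt; apply/orP; left; apply/eqP; ring.
have s2 : \sum_(m <= l < 3 * m) \sum_(0 <= i < m) q i * (Q (l - i) - Q l) <= \sum_(m <= l < 3 * m) D l.
  apply: ler_sum_nat => l /andP [hl _]; rewrite /D [X in _ <= X](big_cat_nat _ (n := m)) //= ?lerDl //.
  apply: sumr_ge0 => i _; apply: mulr_ge0 => //; rewrite subr_ge0; apply: Qmono; lia.
have s3 : \sum_(m <= l < 3 * m) \sum_(0 <= i < m) q i * (Q (l - i) - Q l) =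
   \sum_(0 <= i < m) q i * \sum_(m <= l < 3 * m) (Q (l - i) - Q l).
  by rewrite exchange_big /=; apply: eq_bigr => i _; rewrite mulr_sumr.
have s4 : \sum_(0 <= i < m) q i * (i%:R * (Q m - Q (2 * m))) <=
   \sum_(0 <= i < m) q i * \sum_(m <= l < 3 * m) (Q (l - i) - Q l).
  apply: ler_sum_nat => i /andP [_ hi]; apply: ler_wpM2l => //; apply: Tbound; lia.
have s5 : \sum_(0 <= i < m) q i * (i%:R * (Q m - Q (2 * m))) =
   (\sum_(1 <= i < m) i%:R * q i) * (Q m - Q (2 * m)).
  rewrite big_ltn; last lia.
  rewrite mul0r mulr0 add0r mulr_suml; apply: eq_bigr => i _; ring.
rewrite -s5; apply: le_trans s4 _; rewrite -s3; apply: le_trans s2 _; exact: s1.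
Qed.

Lemma Sform l : (1 <= l)%N ->
  \sum_(1 <= i < l) i%:R * q i = \sum_(1 <= j < l) Q j - (l.-1)%:R * Q l.
Proof.
elim: l => [//|l IH] hl.
case: (l =P 0%N) => [->|hl0]; first by rewrite !big_geq // mul0r subr0.
rewrite !big_nat_recr /=; [|lia|lia].
rewrite IH; last lia.
rewrite hq; case: l IH hl hl0 => [//|l] _ _ _ /=.
rewrite -natr1; ring.
Qed.


Lemma caseB (M0 : nat) : (1 <= M0)%N ->
  (forall m, (M0 <= m)%N -> 2 / 3 * Q m < Q (2 * m)) ->
  forall N, exists l, (N < l)%N /\ (1 <= l)%N /\
     \sum_(1 <= i < l) i%:R * q i <= 5 * l%:R * Q l.
Proof.
move=> hM0 HM N.
pose L k := (2 ^ k * M0)%N.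
have hL k : (M0 <= L k)%N by rewrite /L leq_pmull // expn_gt0.
have hLS k : L k.+1 = (2 * L k)%N by rewrite /L expnS mulnA.
pose T k := \sum_(1 <= j < L k) Q j.
pose a k := (L k)%:R * Q (L k).
have a_ge0 k : 0 <= a k by apply: mulr_ge0.
have b1 k : T k.+1 <= T k + a k.
  have hLk := hL k; rewrite /T hLS (big_cat_nat _ (n := L k)) /=; [|lia|lia].
  rewrite lerD2l; apply: le_trans (ler_sum_nat (G := fun _ => Q (L k)) _) _.
    by move=> j /andP [hj _]; apply: Qmono.
  rewrite sumr_const_nat (_ : (2 * L k - L k = L k)%N); last lia.
  by rewrite /a mulr_natl.
have b2 k : 4 / 3 * a k <= a k.+1.
  rewrite /a hLS natrM; have := HM (L k) (hL k) => h.
  have h0 : 0 <= (L k)%:R :> R by [].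
  have : (L k)%:R * (2 / 3 * Q (L k)) <= (L k)%:R * Q (2 * L k) by apply: ler_wpM2l => //; apply: ltW.
  lra.
have b3 k : T k <= T 0 + 4 * a k.
  elim: k => [|k IH]; first by have := a_ge0 0; lra.
  have := b1 k; have := b2 k; have := a_ge0 k; lra.
have b4 k : a 0 + k%:R * (a 0 / 3) <= a k.
  elim: k => [|k IH]; first by rewrite mul0r addr0.
  have := b2 k; have := a_ge0 0; rewrite -natr1.
  have : 0 <= k%:R * (a 0 / 3) by apply: mulr_ge0 => //; apply: divr_ge0.
  lra.
have a0pos : 0 < a 0.
  by apply: mulr_gt0; [rewrite ltr0n /L expn0 mul1n; lia|apply: Qpos; rewrite /L expn0 mul1n].
pose K := Num.truncn (T 0 / (a 0 / 3)).
have hK : T 0 / (a 0 / 3) < K.+1%:R by exact: truncnS_gt.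
pose k := (N + K.+1)%N.
have hk : K.+1%:R <= k%:R :> R by rewrite ler_nat /k leq_addl.
have hT0 : T 0 <= k%:R * (a 0 / 3).
  have ha3 : 0 < a 0 / 3 by apply: divr_gt0.
  have e : T 0 = T 0 / (a 0 / 3) * (a 0 / 3) by rewrite divfK // gt_eqF.
  rewrite e; apply: ltW; apply: (@lt_le_trans _ _ (K.+1%:R * (a 0 / 3))).
    by rewrite ltr_pM2r.
  by rewrite ler_pM2r.
exists (L k); split.
  have : (k < 2 ^ k)%N by apply: ltn_expl.
  have : (2 ^ k <= L k)%N by rewrite /L leq_pmulr.
  rewrite /k; lia.
split; first by have := hL k; lia.
rewrite Sform; last by have := hL k; lia.
have hp : 0 <= (L k).-1%:R * Q (L k) by apply: mulr_ge0.
have h5 : T k <= 5 * a k.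
  have := b3 k; have := b4 k; have := a_ge0 0; have := a_ge0 k.
  have : 0 <= k%:R * (a 0 / 3) by apply: mulr_ge0 => //; apply: divr_ge0 => //; apply: ltW.
  lra.
rewrite /a /T in h5; rewrite -mulrA; lra.
Qed.

Lemma final_analytic : exists C : R, 0 < C /\
    forall N : nat, exists l : nat, (N < l)%N /\ (1 <= l)%N /\
      \sum_(1 <= i < l) (i%:R * q i) <= C * l%:R * Q l.
Proof.
have h6 : 0 < 6 / p by apply: divr_gt0.
exists (6 / p + 5); split; first lra.
case: (pselect (forall M0, exists m, (M0 <= m)%N /\ Q (2 * m) <= 2 / 3 * Q m)) => [HA|HB] N.
  have [m [hm hQ]] := HA N.+2.
  exists m; split; first lia; split; first lia.
  have hA := caseA m ltac:(lia).
  have hpos := Qpos m ltac:(lia).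
  set S := \sum_(1 <= i < m) i%:R * q i in hA *.
  have hS : 0 <= S by apply: sumr_ge0 => i _; apply: mulr_ge0.
  have h1 : S * (Q m / 3) <= (6 / p * (m%:R * Q m)) * (Q m / 3).
    rewrite (_ : 6 / p * (m%:R * Q m) * (Q m / 3) = 2 * m%:R * Q m ^+ 2 / p); last first.
      by rewrite expr2; field; rewrite gt_eqF.
    apply: le_trans _ hA; apply: ler_wpM2l => //; lra.
  rewrite ler_pM2r in h1; last by apply: divr_gt0.
  have hX : 0 <= m%:R * Q m by apply: mulr_ge0 => //; apply: ltW.
  rewrite -mulrA mulrDl; lra.
have [M0 HM0] : exists M0, forall m, (M0 <= m)%N -> 2 / 3 * Q m < Q (2 * m).
  move/existsNP: HB => [M0 HM0]; exists M0 => m hm; rewrite ltNge; apply/negP => hle.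
  by apply: HM0; exists m.
have [l [hl1 [hl2 hl3]]] := caseB (maxn M0 1) (leq_maxr _ _) (fun m hm => HM0 m ltac:(lia)) N.
exists l; split => //; split => //; apply: le_trans hl3 _.
have hX : 0 <= l%:R * Q l by apply: mulr_ge0.
have : 0 <= 6 / p * (l%:R * Q l) by apply: mulr_ge0 => //; apply: ltW.
rewrite -!mulrA mulrDl; lra.
Qed.

End Analytic.

Local Close Scope classical_set_scope.

Theorem lemma6p5 (R : realType) (p : R) (hp0 : 0 < p) (hp1 : p < 1) :
  exists C : R, 0 < C /\
    forall N : nat, exists l : nat, (N < l)%N /\ (1 <= l)%N /\
      \sum_(1 <= i < l) (i%:R * q p i) <= C * l%:R * Q p l.
Proof.
have hQ k : Q p k = E p (Ak k).
  rewrite /Q bgw_prob_E //; congr (E p _); apply: funext => t; by rewrite /Ak LIS_lis.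
have hqq i : q p i = E p (Bi i).
  rewrite /q bgw_prob_E //; congr (E p _); apply: funext => t; by rewrite /Bi LIS_lis.
have m1 := @mass1 _ _ hp0 hp1.
apply: (@final_analytic R p (Q p) (q p)) => //.
- by move=> i; rewrite hqq !hQ; apply: B_eq.
- by move=> i; rewrite hqq; apply: E_ge0.
- by move=> i; rewrite hQ; apply: E_ge0.
- by rewrite hQ (_ : Ak 0 = top) //; apply: funext => t.
- rewrite hQ (_ : Ak 1 = top) //; apply: funext => t; by rewrite /Ak lis_ge1.
move=> k hk; under eq_bigr do rewrite hqq hQ.
have eq := @A_rec _ _ hp0 hp1 _ hk; rewrite m1 in eq.
rewrite hQ; set a := E p (Ak k) in eq *.
set S := \sum_(0 <= i < k) _ in eq *.
apply/eqP; rewrite -subr_eq0; apply/eqP.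
have -> : p * a + (1 - p) * a ^+ 2 - p * S =
   2 * (a - (p / 2 * (a * 1 + S) + (1 - p) / 2 * (a * 1 + 1 * a - a * a))) by field.
by rewrite -eq subrr mulr0.
Qed.
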